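(* There is an algorithm that, given a \textsc{2-Visits} instance $d_1\le\dots\le d_n$ whose deadlines are pairwise distinct, decides in $O(n)$ time whether a feasible schedule exists; moreover, if one exists, a feasible schedule can be constructed in $O(n)$ time.
   Context: \textsc{2-Visits}: given a non-decreasing sequence of $n$ positive integers (deadlines) $d_1\le \dots\le d_n$, decide whether there exists a schedule of length $2n$ (an assignment of one visit to each position $1,\dots,2n$) containing exactly two visits of each node $i\in[n]$, such that the first visit of $i$ is at position at most $d_i$ and the second visit of $i$ is at most $d_i$ positions after the first visit of $i$. Such a schedule is called feasible. *)

(* Defs.v *)
From mathcomp Require Import all_boot.
Set Implicit Arguments. Unset Strict Implicit. Unset Printing Implicit Defensive.

(** * 2-Visits instances and feasible schedules
    Nodes are 0-indexed: node i (0 <= i < n) has deadline [nth 0 d i].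
    A schedule is a sequence [s] of length 2n; position j of the paper
    (1-based) is entry [nth _ s (j-1)]. *)

Definition instance (d : seq nat) : Prop :=
  all (fun x => 0 < x) d /\ sorted leq d.

Definition distinct_deadlines (d : seq nat) : Prop := uniq d.

Definition first_visit (s : seq nat) (i : nat) : nat := (index i s).+1.
Definition second_visit (s : seq nat) (i : nat) : nat :=
  first_visit s i + (index i (drop (first_visit s i) s)).+1.

Definition feasible (d s : seq nat) : Prop :=
  size s = 2 * size d /\
  all (fun x => x < size d) s /\
  forall i, i < size d ->
    [/\ count_mem i s = 2,
        first_visit s i <= nth 0 d i &
        second_visit s i <= first_visit s i + nth 0 d i].

(** * Unit-cost RAM model (registers and memory hold naturals)
    Instructions (r, a, b are register indices, l a program label): *)
Inductive instr : Type :=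
| Const (r v : nat)
| Add (r a b : nat)
| Sub (r a b : nat)          (* R[r] := R[a] - R[b] (truncated) *)
| Ld (r a : nat)
| St (a b : nat)
| Jz (r l : nat)
| Jmp (l : nat)
| Halt.

Definition program := seq instr.

Record state := State { pc : nat; reg : nat -> nat; mem : nat -> nat }.

Definition upd (f : nat -> nat) (x v : nat) : nat -> nat :=
  fun y => if y == x then v else f y.

Definition halted (P : program) (st : state) : bool :=
  (size P <= pc st) ||
  (if nth Halt P (pc st) is Halt then true else false).

Definition step (P : program) (st : state) : state :=
  let: State p R M := st in
  if halted P st then st else
  match nth Halt P p with
  | Const r v => State p.+1 (upd R r v) M
  | Add r a b => State p.+1 (upd R r (R a + R b)) M
  | Sub r a b => State p.+1 (upd R r (R a - R b)) M
  | Ld r a => State p.+1 (upd R r (M (R a))) M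
  | St a b => State p.+1 R (upd M (R a) (R b))
  | Jz r l => if R r == 0 then State l R M else State p.+1 R M
  | Jmp l => State l R M
  | Halt => st
  end.

Definition run (P : program) (k : nat) (st : state) : state := iter k (step P) st.

Definition init_state (d : seq nat) : state :=
  State 0 (fun r => if r == 0 then size d else 0)
          (fun a => if a < size d then nth 0 d a else 0).

(* Output convention: on halting, R[0] = 1 means "feasible", R[0] = 0 means
   "infeasible"; when feasible, the schedule is in M[n], ..., M[3n-1]. *)
Definition output_schedule (d : seq nat) (st : state) : seq nat :=
  mkseq (fun j => mem st (size d + j)) (2 * size d).

(* Main.v *)
Require Import Defs.
From mathcomp Require Import all_boot zify.


Definition Prog : program := [::
 (*0*) Const 10 1; (*1*) Add 1 0 11; (*2*) Add 5 1 1; (*3*) Add 6 5 1; (*4*) Const 2 1;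
 (*5*) Defs.Sub 7 2 5; (*6*) Jz 7 8; (*7*) Jmp 36;
 (*8*) Defs.Sub 7 1 4; (*9*) Jz 7 13; (*10*) Ld 8 4; (*11*) Defs.Sub 7 8 2; (*12*) Jz 7 26;
 (*13*) Defs.Sub 7 4 3; (*14*) Jz 7 26;
 (*15*) Add 7 6 3; (*16*) Ld 8 7; (*17*) Defs.Sub 9 2 8; (*18*) Jz 9 20; (*19*) Jmp 38;
 (*20*) Add 7 1 2; (*21*) Defs.Sub 7 7 10; (*22*) St 7 3; (*23*) Add 3 3 10; (*24*) Add 2 2 10; (*25*) Jmp 5;
 (*26*) Ld 8 4; (*27*) Add 8 8 2; (*28*) Add 7 6 4; (*29*) St 7 8; (*30*) Add 7 1 2; (*31*) Defs.Sub 7 7 10;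
 (*32*) St 7 4; (*33*) Add 4 4 10; (*34*) Add 2 2 10; (*35*) Jmp 5;
 (*36*) Const 0 1; (*37*) Halt; (*38*) Const 0 0; (*39*) Halt].

Arguments run : simpl never.

Lemma runS P k st : run P k.+1 st = run P k (step P st).
Proof. by rewrite /run iterSr. Qed.


Definition exec (i : instr) (p : nat) (R M : nat -> nat) : state :=
  match i with
  | Const r v => State p.+1 (upd R r v) M
  | Add r a b => State p.+1 (upd R r (R a + R b)) M
  | Defs.Sub r a b => State p.+1 (upd R r (R a - R b)) M
  | Ld r a => State p.+1 (upd R r (M (R a))) M
  | St a b => State p.+1 R (upd M (R a) (R b))
  | Jz r l => if R r == 0 then State l R M else State p.+1 R M
  | Jmp l => State l R M
  | Halt => State p R M
  end.

Lemma stepE P p R M : p < size P -> step P (State p R M) = exec (nth Halt P p) p R M.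
Proof.
move=> hp; rewrite /step /halted /= leqNgt hp /=.
by case: (nth Halt P p).
Qed.

Ltac stp := rewrite runS stepE //= /upd /=.

Definition loopregs (R : nat -> nat) n p h u :=
  [/\ R 1 = n, R 5 = n + n, R 6 = n + n + n, R 10 = 1 & [/\ R 2 = p, R 3 = h & R 4 = u]].


Ltac cond H := let e := fresh in have e := H; rewrite ?e /=.

Lemma pop_step n p h u R M :
  loopregs R n p h u -> p <= n + n -> h < u ->
  (u < n -> p < M u) -> p <= M (n + n + n + h) ->
  exists k R', k <= 20 /\ run Prog k (State 5 R M) = State 5 R' (upd M (n + p - 1) h)
     /\ loopregs R' n p.+1 h.+1 u.
Proof.
move=> [R1 R5 R6 R10 [R2 R3 R4]] hp hq hu hE.
have e1 : (p - (n + n) == 0) by rewrite subn_eq0.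
have e2 : (u - h == 0) = false by apply/negbTE; rewrite subn_eq0 -ltnNge.
have e3 : (p - M (n + n + n + h) == 0) by rewrite subn_eq0.
case: (ltnP u n) => un.
- have e4 : (n - u == 0) = false by apply/negbTE; rewrite subn_eq0 -ltnNge.
  have e5 : (M u - p == 0) = false by apply/negbTE; rewrite subn_eq0 -ltnNge hu.
  exists 19.
  do 19 (stp; rewrite ?R1 ?R2 ?R3 ?R4 ?R5 ?R6 ?R10 ?e1 ?e2 ?e3 ?e4 ?e5 /=).
  rewrite /run /=.
  eexists; split; first done; split; first reflexivity.
  by split => //=; rewrite ?R1 ?R2 ?R3 ?R4 ?R5 ?R6 ?R10 ?addn1.
- have e4 : (n - u == 0) by rewrite subn_eq0.
  exists 16.
  do 16 (stp; rewrite ?R1 ?R2 ?R3 ?R4 ?R5 ?R6 ?R10 ?e1 ?e2 ?e3 ?e4 /=).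
  rewrite /run /=.
  eexists; split; first done; split; first reflexivity.
  by split => //=; rewrite ?R1 ?R2 ?R3 ?R4 ?R5 ?R6 ?R10 ?addn1.
Qed.

Lemma push_step n p h u R M :
  loopregs R n p h u -> p <= n + n -> u < n -> (M u <= p \/ u = h) ->
  exists k R', k <= 20 /\
    run Prog k (State 5 R M) = State 5 R' (upd (upd M (n + n + n + u) (M u + p)) (n + p - 1) u)
     /\ loopregs R' n p.+1 h u.+1.
Proof.
move=> [R1 R5 R6 R10 [R2 R3 R4]] hp un hc.
have e1 : (p - (n + n) == 0) by rewrite subn_eq0.
have e4 : (n - u == 0) = false by apply/negbTE; rewrite subn_eq0 -ltnNge.
case: (leqP (M u) p) => hM.
- have e5 : (M u - p == 0) by rewrite subn_eq0.
  exists 17.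
  do 17 (stp; rewrite ?R1 ?R2 ?R3 ?R4 ?R5 ?R6 ?R10 ?e1 ?e4 ?e5 /=).
  rewrite /run /=.
  eexists; split; first done; split; first reflexivity.
  by split => //=; rewrite ?R1 ?R2 ?R3 ?R4 ?R5 ?R6 ?R10 ?addn1.
- have e5 : (M u - p == 0) = false by apply/negbTE; rewrite subn_eq0 -ltnNge.
  have {}hc : u = h by case: hc => //; rewrite leqNgt hM.
  have e2 : (u - h == 0) by rewrite hc subnn.
  exists 19.
  do 19 (stp; rewrite ?R1 ?R2 ?R3 ?R4 ?R5 ?R6 ?R10 ?e1 ?e2 ?e4 ?e5 /=).
  rewrite /run /=.
  eexists; split; first done; split; first reflexivity.
  by split => //=; rewrite ?R1 ?R2 ?R3 ?R4 ?R5 ?R6 ?R10 ?addn1.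
Qed.

Lemma fail_step n p h u R M :
  loopregs R n p h u -> p <= n + n -> h < u ->
  (u < n -> p < M u) -> M (n + n + n + h) < p ->
  exists k R', k <= 20 /\ run Prog k (State 5 R M) = State 39 R' M /\ R' 0 = 0.
Proof.
move=> [R1 R5 R6 R10 [R2 R3 R4]] hp hq hu hE.
have e1 : (p - (n + n) == 0) by rewrite subn_eq0.
have e2 : (u - h == 0) = false by apply/negbTE; rewrite subn_eq0 -ltnNge.
have e3 : (p - M (n + n + n + h) == 0) = false by apply/negbTE; rewrite subn_eq0 -ltnNge.
case: (ltnP u n) => un.
- have e4 : (n - u == 0) = false by apply/negbTE; rewrite subn_eq0 -ltnNge.
  have e5 : (M u - p == 0) = false by apply/negbTE; rewrite subn_eq0 -ltnNge hu.
  exists 15.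
  do 15 (stp; rewrite ?R1 ?R2 ?R3 ?R4 ?R5 ?R6 ?R10 ?e1 ?e2 ?e3 ?e4 ?e5 /=).
  rewrite /run /=.
  by eexists; split; first done; split; first reflexivity.
- have e4 : (n - u == 0) by rewrite subn_eq0.
  exists 12.
  do 12 (stp; rewrite ?R1 ?R2 ?R3 ?R4 ?R5 ?R6 ?R10 ?e1 ?e2 ?e3 ?e4 /=).
  rewrite /run /=.
  by eexists; split; first done; split; first reflexivity.
Qed.

Lemma done_step n p h u R M :
  loopregs R n p h u -> n + n < p ->
  exists R', run Prog 4 (State 5 R M) = State 37 R' M /\ R' 0 = 1.
Proof.
move=> [R1 R5 R6 R10 [R2 R3 R4]] hp.
have e1 : (p - (n + n) == 0) = false by apply/negbTE; rewrite subn_eq0 -ltnNge.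
do 4 (stp; rewrite ?R1 ?R2 ?R3 ?R4 ?R5 ?R6 ?R10 ?e1 /=).
rewrite /run /=.
by eexists; split; first reflexivity.
Qed.

Lemma init_step d :
  exists R', run Prog 5 (init_state d) = State 5 R' (Defs.mem (init_state d))
    /\ loopregs R' (size d) 1 0 0.
Proof.
rewrite /init_state.
do 5 stp.
rewrite /run /=.
eexists; split; first reflexivity.
by split => //=; rewrite ?add0n ?addn0.
Qed.


Definition strict (d : seq nat) := forall i j, i < j -> j < size d -> nth 0 d i < nth 0 d j.

Record Inv (d : seq nat) (p h u : nat) (M F G : nat -> nat) : Prop := {
 iv_hu : h <= u; iv_un : u <= size d; iv_p : p = u + h + 1;
 iv_d : forall a, a < size d -> M a = nth 0 d a;
 iv_F : forall i, i < u -> [/\ 0 < F i, F i <= nth 0 d i, F i < p,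
            M (size d + (F i).-1) = i & M (size d + size d + size d + i) = F i + nth 0 d i];
 iv_G : forall i, i < h -> [/\ F i < G i, G i < p, M (size d + (G i).-1) = i &
            G i <= M (size d + size d + size d + i)];
 iv_S : forall j, j < p.-1 -> M (size d + j) < u /\
            (j.+1 = F (M (size d + j)) \/ (M (size d + j) < h /\ j.+1 = G (M (size d + j))));
 iv_C : forall t, t < p -> \sum_(0 <= i < u) (F i <= t) + \sum_(0 <= i < h) (G i <= t) = t;
 iv_D : u < size d -> p <= nth 0 d u;
 iv_U : forall i, i < u -> F i < nth 0 d i -> i < h \/ (i = h /\ p <= nth 0 d i)
}.

Lemma sum_all_true (f : nat -> nat) m t :
  (forall i, i < m -> f i <= t) -> \sum_(0 <= i < m) (f i <= t) = m.
Proof.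
move=> H; rewrite (eq_big_nat _ _ (F2 := fun _ => 1)); last by move=> i /andP[_ /H ->].
by rewrite sum_nat_const_nat subn0 muln1.
Qed.

Lemma sum_upd_last (f : nat -> nat) m v t :
  \sum_(0 <= i < m.+1) (upd f m v i <= t) = \sum_(0 <= i < m) (f i <= t) + (v <= t).
Proof.
rewrite big_nat_recr //= /upd eqxx; congr (_ + _).
apply: eq_big_nat => i /andP[_ him]; by rewrite (ltn_eqF him).
Qed.

Lemma inv_push d p h u M F G : strict d -> Inv d p h u M F G -> u < size d ->
  (M u <= p \/ u = h) ->
  Inv d p.+1 h u.+1 (upd (upd M (size d + size d + size d + u) (M u + p)) (size d + p - 1) u)
      (upd F u p) G.
Proof.
move=> hs [hhu hun hp hd hF hG hS hC hD hU] un hc.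
have hdu : M u = nth 0 d u by apply: hd.
have pu : p <= nth 0 d u by apply: hD.
have p2 : p <= size d + size d by lia.
split.
- lia.
- by [].
- lia.
- move=> a an; rewrite /upd.
  have -> : (a == size d + p - 1) = false by apply/negbTE; lia.
  have -> : (a == size d + size d + size d + u) = false by apply/negbTE; lia.
  exact: hd.
- move=> i; rewrite ltnS leq_eqVlt => /orP[/eqP -> | iu].
  + rewrite /upd eqxx; split => //; first lia.
    * have -> : (size d + p.-1 == size d + p - 1) by apply/eqP; lia.
      by [].
    * have -> : (size d + size d + size d + u == size d + p - 1) = false by apply/negbTE; lia.
      by rewrite eqxx hdu addnC.
  + have [F0 F1 F2 F3 F4] := hF i iu.
    rewrite /upd (ltn_eqF iu); split => //; first lia.
    * have -> : (size d + (F i).-1 == size d + p - 1) = false by apply/negbTE; lia.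
      have -> : (size d + (F i).-1 == size d + size d + size d + u) = false by apply/negbTE; lia.
      by [].
    * have -> : (size d + size d + size d + i == size d + p - 1) = false by apply/negbTE; lia.
      have -> : (size d + size d + size d + i == size d + size d + size d + u) = false by apply/negbTE; lia.
      by [].
- move=> i ih.
  have [G0 G1 G2 G3] := hG i ih.
  have iu : i < u by lia.
  have [F0 F1 F2 F3 F4] := hF i iu.
  rewrite /upd (ltn_eqF iu); split => //; first lia.
  * have -> : (size d + (G i).-1 == size d + p - 1) = false by apply/negbTE; lia.
    have -> : (size d + (G i).-1 == size d + size d + size d + u) = false by apply/negbTE; lia.
    by [].
  * have -> : (size d + size d + size d + i == size d + p - 1) = false by apply/negbTE; lia.
    have -> : (size d + size d + size d + i == size d + size d + size d + u) = false by apply/negbTE; lia.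
    by [].
- move=> j jp1; have [-> | jp] : j = p.-1 \/ j < p.-1 by move: jp1 => /=; lia.
  + rewrite /upd.
    have -> : (size d + p.-1 == size d + p - 1) by apply/eqP; lia.
    by rewrite ltnSn eqxx; split => //; left; lia.
  + rewrite /upd.
    have -> : (size d + j == size d + p - 1) = false by apply/negbTE; lia.
    have -> : (size d + j == size d + size d + size d + u) = false by apply/negbTE; lia.
    have [S0 S1] := hS j jp.
    rewrite (ltn_eqF S0); split; first lia.
    by [].
- move=> t; rewrite ltnS leq_eqVlt => /orP[/eqP -> | tp].
  + rewrite sum_all_true; last first.
      move=> i; rewrite ltnS leq_eqVlt => /orP[/eqP -> | iu]; first by rewrite /upd eqxx.
      by rewrite /upd (ltn_eqF iu); have [_ _ ? _ _] := hF i iu; lia.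
    rewrite sum_all_true; first lia.
    by move=> i ih; have [_ ? _ _] := hG i ih; lia.
  + rewrite sum_upd_last.
    have -> : (p <= t) = false by apply/negbTE; rewrite -ltnNge.
    by rewrite addn0; apply: hC.
- move=> u1n.
  have := hs u u.+1 (ltnSn u) u1n; lia.
- move=> i; rewrite ltnS leq_eqVlt => /orP[/eqP -> | iu].
  + rewrite /upd eqxx => pdu.
    case: hc => [hc | <-]; first lia.
    by right; split => //; lia.
  + rewrite /upd (ltn_eqF iu) => Fi.
    case: (hU i iu Fi) => [-> | [ih pdi]]; first by left.
    case: hc => [hc | hc]; last lia.
    have := hs i u iu un; lia.
Qed.

Lemma inv_pop d p h u M F G : Inv d p h u M F G -> h < u ->
  (u < size d -> p < nth 0 d u) -> p <= M (size d + size d + size d + h) ->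
  Inv d p.+1 h.+1 u (upd M (size d + p - 1) h) F (upd G h p).
Proof.
move=> [hhu hun hp hd hF hG hS hC hD hU] hq hc hE.
have p2 : p <= size d + size d by lia.
split.
- by [].
- by [].
- lia.
- move=> a an; rewrite /upd.
  have -> : (a == size d + p - 1) = false by apply/negbTE; lia.
  exact: hd.
- move=> i iu.
  have [F0 F1 F2 F3 F4] := hF i iu.
  rewrite /upd; split => //; first lia.
  * have -> : (size d + (F i).-1 == size d + p - 1) = false by apply/negbTE; lia.
    by [].
  * have -> : (size d + size d + size d + i == size d + p - 1) = false by apply/negbTE; lia.
    by [].
- move=> i; rewrite ltnS leq_eqVlt => /orP[/eqP -> | ih].
  + have [F0 F1 F2 F3 F4] := hF h hq.
    rewrite /upd eqxx; split => //.
    * have -> : (size d + p.-1 == size d + p - 1) by apply/eqP; lia.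
      by [].
    * have -> : (size d + size d + size d + h == size d + p - 1) = false by apply/negbTE; lia.
      by [].
  + have [G0 G1 G2 G3] := hG i ih.
    rewrite /upd (ltn_eqF ih); split => //; first lia.
    * have -> : (size d + (G i).-1 == size d + p - 1) = false by apply/negbTE; lia.
      by [].
    * have -> : (size d + size d + size d + i == size d + p - 1) = false by apply/negbTE; lia.
      by [].
- move=> j jp1; have [-> | jp] : j = p.-1 \/ j < p.-1 by move: jp1 => /=; lia.
  + rewrite /upd.
    have -> : (size d + p.-1 == size d + p - 1) by apply/eqP; lia.
    by rewrite hq eqxx; split => //; right; split => //; lia.
  + rewrite /upd.
    have -> : (size d + j == size d + p - 1) = false by apply/negbTE; lia.
    have [S0 S1] := hS j jp.
    split => //.
    case: S1 => [S1 | [S1 S2]]; first by left.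
    by right; rewrite (ltn_eqF S1); split => //; lia.
- move=> t; rewrite ltnS leq_eqVlt => /orP[/eqP -> | tp].
  + rewrite sum_all_true; last first.
      by move=> i iu; have [_ _ ? _ _] := hF i iu; lia.
    rewrite sum_all_true; first lia.
    move=> i; rewrite ltnS leq_eqVlt => /orP[/eqP -> | ih]; first by rewrite /upd eqxx.
    by rewrite /upd (ltn_eqF ih); have [_ ? _ _] := hG i ih; lia.
  + rewrite sum_upd_last.
    have -> : (p <= t) = false by apply/negbTE; rewrite -ltnNge.
    by rewrite addn0; apply: hC.
- move=> un; have := hc un; lia.
- move=> i iu Fi.
  case: (hU i iu Fi) => [ih | [-> _]]; left; lia.
Qed.

Lemma leq_sum_range m n (F1 F2 : nat -> nat) :
  (forall i, i < n -> F1 i <= F2 i) -> \sum_(m <= i < n) F1 i <= \sum_(m <= i < n) F2 i.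
Proof.
move=> H; rewrite big_nat_cond [X in _ <= X]big_nat_cond.
by apply: leq_sum => i /andP[/andP[_ ?] _]; apply: H.
Qed.

Lemma sum_eq1 x n : x < n -> \sum_(0 <= i < n) (x == i) = 1.
Proof.
elim: n => [//|n IH] xn.
rewrite big_nat_recr //=.
case: (ltnP x n) => xn'.
- by rewrite IH // (ltn_eqF xn').
- have -> : x = n by lia.
  rewrite eqxx big1_seq //= => i; rewrite mem_iota add0n => /andP[_ hi].
  by rewrite eq_sym (ltn_eqF (leq_trans hi (leq_subr 0 n))).
Qed.

Lemma size_count n (t : seq nat) : all (fun x => x < n) t ->
  size t = \sum_(0 <= i < n) count_mem i t.
Proof.
elim: t => [|x t IH] /=.
- by rewrite big1_seq.
- move=> /andP[xn ht].
  rewrite big_split /= sum_eq1 // -IH //.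
Qed.

Lemma count_take_mono (s : seq nat) i m T : m <= T ->
  count_mem i (take m s) <= count_mem i (take T s).
Proof.
move=> mT.
rewrite -[take T s](cat_take_drop m) take_takel // count_cat.
exact: leq_addr.
Qed.

Lemma count_take_nth (s : seq nat) i a : a < size s -> nth 0 s a = i ->
  count_mem i (take a.+1 s) = (count_mem i (take a s)).+1.
Proof.
move=> as_ ha; rewrite (take_nth 0 as_) -cats1 count_cat ha /= eqxx; lia.
Qed.

Lemma cnt2 (s : seq nat) i a b T : a < b -> b < size s -> nth 0 s a = i -> nth 0 s b = i ->
  (a < T) + (b < T) <= count_mem i (take T s).
Proof.
move=> ab bs ha hb.
have c1 : 1 <= count_mem i (take a.+1 s) by rewrite count_take_nth //; lia.
case: (ltnP b T) => bT.
- have aT : a < T by lia.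
  rewrite aT /=.
  have c2 : 2 <= count_mem i (take b.+1 s).
    rewrite count_take_nth //.
    have := @count_take_mono s i _ _ ab; lia.
  exact: leq_trans c2 (@count_take_mono s i _ _ bT).
- rewrite addn0; case: (ltnP a T) => aT //=.
  exact: leq_trans c1 (@count_take_mono s i _ _ aT).
Qed.

Lemma necessary d s T : feasible d s ->
  \sum_(0 <= i < size d) (nth 0 d i <= T) + \sum_(0 <= i < size d) (nth 0 d i + nth 0 d i <= T) <= T.
Proof.
move=> [hs [hall hf]].
case: (leqP T (size s)) => hT; last first.
- have b1 : \sum_(0 <= i < size d) (nth 0 d i <= T) <= size d.
    have := leq_sum_range 0 (size d) (fun i => (nth 0 d i <= T) : nat) (fun _ => 1).
    rewrite sum_nat_const_nat subn0 muln1; apply => i _ /=; exact: leq_b1.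
  have b2 : \sum_(0 <= i < size d) (nth 0 d i + nth 0 d i <= T) <= size d.
    have := leq_sum_range 0 (size d) (fun i => (nth 0 d i + nth 0 d i <= T) : nat) (fun _ => 1).
    rewrite sum_nat_const_nat subn0 muln1; apply => i _ /=; exact: leq_b1.
  lia.
- have allT : all (fun x => x < size d) (take T s).
    by apply/allP => x /mem_take /(allP hall).
  rewrite -[X in _ <= X](size_takel hT) (@size_count _ _ allT) -big_split /=.
  apply: leq_sum_range => i id.
  have [c2 f1 f2] := hf i id.
  have iin : i \in s by rewrite -has_pred1 has_count c2.
  set a := index i s in f1 f2.
  have ha : nth 0 s a = i by apply: nth_index.
  have as_ : a < size s by rewrite index_mem.
  have ct : count_mem i (take a s) = 0.
    apply/count_memPn; rewrite in_take_leq ?ltnn //; exact: index_size.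
  have cd : count_mem i (drop a.+1 s) = 1.
    move: c2; rewrite -[s in count_mem i s](cat_take_drop a.+1) count_cat count_take_nth // ct; lia.
  have iind : i \in drop a.+1 s by rewrite -has_pred1 has_count cd.
  set b' := index i (drop a.+1 s) in f2.
  have hb : nth 0 s (a.+1 + b') = i by rewrite -nth_drop nth_index.
  have bs : a.+1 + b' < size s.
    have : b' < size (drop a.+1 s) by rewrite index_mem.
    rewrite size_drop; lia.
  have := @cnt2 s i _ _ T (ltn_addr _ (ltnSn a)) bs ha hb.
  rewrite /second_visit /first_visit -/a -/b' in f1 f2.
  case: (leqP (nth 0 d i) T) => h1; case: (leqP (nth 0 d i + nth 0 d i) T) => h2;
    case: (ltnP a T) => h3; case: (ltnP (a.+1 + b') T) => h4 /=; try lia.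
Qed.

Lemma index_char (s : seq nat) x j : j < size s -> nth 0 s j = x ->
  (forall k, k < j -> nth 0 s k != x) -> index x s = j.
Proof.
move=> js hj hk.
have xin : x \in s by rewrite -hj mem_nth.
case: (ltngtP (index x s) j) => // h.
- by have := hk _ h; rewrite nth_index // eqxx.
- have := before_find 0 h; rewrite /= hj eqxx //.
Qed.

Lemma count_two m a b : a < b -> b < m ->
  count (fun j => (j == a) || (j == b)) (iota 0 m) = 2.
Proof.
move=> ab bm.
have := count_predUI (pred1 a) (pred1 b) (iota 0 m).
rewrite !count_uniq_mem ?iota_uniq // !mem_iota /=.
have -> : count (predI (pred1 a) (pred1 b)) (iota 0 m) = 0.
  apply/eqP; rewrite -leqn0 leqNgt -has_count; apply/hasPn => j _ /=.
  by apply/negP => /andP[/eqP -> /eqP]; lia.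
have -> : (a < 0 + m) by lia.
have -> : (b < 0 + m) by lia.
rewrite addn0 /= => H.
by rewrite (@eq_count _ _ (predU (pred1 a) (pred1 b))) // H.
Qed.

Lemma feas_of_pos d s : size s = 2 * size d -> all (fun x => x < size d) s ->
  (forall i, i < size d -> exists a b, [/\ a < b, b < size s, a < nth 0 d i, b - a <= nth 0 d i &
      forall j, j < size s -> (nth 0 s j == i) = (j == a) || (j == b)]) ->
  feasible d s.
Proof.
move=> hs hall hp; split => //; split => // i id.
have [a [b [ab bs ad bd hj]]] := hp i id.
have ha : nth 0 s a = i by apply/eqP; rewrite hj ?eqxx //; lia.
have hb : nth 0 s b = i by apply/eqP; rewrite hj ?eqxx ?orbT //; lia.
have ia : index i s = a.
  apply: index_char => //; first lia.
  by move=> k ka; rewrite hj; [apply/negP => /orP[] /eqP; lia | lia].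
have ib : index i (drop a.+1 s) = b - a.+1.
  apply: index_char.
  - rewrite size_drop; lia.
  - by rewrite nth_drop; have -> : a.+1 + (b - a.+1) = b by lia.
  - move=> k kb; rewrite nth_drop hj; [apply/negP => /orP[] /eqP; lia | lia].
split.
- rewrite -(mkseq_nth 0 s) /mkseq count_map.
  rewrite -(@count_two _ _ _ ab bs); apply: eq_in_count => j; rewrite mem_iota /= => hj'.
  by rewrite hj //; lia.
- by rewrite /first_visit ia.
- rewrite /second_visit /first_visit ia ib; lia.
Qed.

Lemma inv_done d p h u M F G : Inv d p h u M F G -> p = size d + size d + 1 ->
  feasible d (mkseq (fun j => M (size d + j)) (2 * size d)).
Proof.
move=> [hhu hun hp hd hF hG hS hC hD hU] pe.
have un : u = size d by lia.
have hn : h = size d by lia.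
subst u h.
have nthS : forall j, j < 2 * size d -> nth 0 (mkseq (fun j => M (size d + j)) (2 * size d)) j = M (size d + j).
  by move=> j jn; rewrite nth_mkseq.
apply: feas_of_pos.
- by rewrite size_mkseq.
- apply/allP => x /mapP [j]; rewrite mem_iota => /andP[_ jn] ->.
  by have [] := hS j ltac:(lia).
- move=> i id.
  have [F0 F1 F2 F3 F4] := hF i id.
  have [G0 G1 G2 G3] := hG i id.
  exists (F i).-1, (G i).-1; rewrite size_mkseq; split; try lia.
  move=> j jn; rewrite nthS //.
  case: (eqVneq (M (size d + j)) i) => hji.
  + have [_ S1] := hS j ltac:(lia).
    rewrite hji in S1; case: S1 => [S1 | [_ S1]]; rewrite -S1 /=; first by rewrite eqxx.
    by rewrite eqxx orbT.
  + apply/esym/negP => /orP[] /eqP hj; move: hji; rewrite hj ?F3 ?G2 eqxx //.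
Qed.

Lemma inv_init d : (forall i, i < size d -> 0 < nth 0 d i) ->
  Inv d 1 0 0 (Defs.mem (init_state d)) (fun _ => 0) (fun _ => 0).
Proof.
move=> hpos; split => //=.
- by move=> a ->.
- by move=> t; rewrite ltnS leqn0 => /eqP ->; rewrite !big_geq.
- by move=> /hpos.
Qed.

Lemma inv_fail d p h u M F G : strict d -> Inv d p h u M F G -> h < u ->
  M (size d + size d + size d + h) < p -> forall s, ~ feasible d s.
Proof.
move=> hs [hhu hun hp hd hF hG hS hC hD hU] hq hE s fs.
have [F0 F1 F2 F3 F4] := hF h hq.
have Fh : F h = nth 0 d h.
  case: (ltngtP (F h) (nth 0 d h)) => // Flt; last lia.
  case: (hU h hq Flt) => [|[_ ]]; lia.
set e := M (size d + size d + size d + h) in hE F4.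
have := @necessary d s e fs.
have hC' := hC e hE.
have A : \sum_(0 <= i < u) (F i <= e) = \sum_(0 <= i < size d) (nth 0 d i <= e).
  rewrite (big_cat_nat (leq0n u) hun) /=.
  rewrite [X in _ = _ + X]big1_seq ?addn0; last first.
    move=> i /andP[_]; rewrite mem_iota => /andP[ui ind].
    have id : i < size d by lia.
    have pu : p <= nth 0 d u by apply: hD; lia.
    have hui : nth 0 d u <= nth 0 d i.
      by case: (ltngtP u i) => [ui' | iu' | ->] //; [exact: ltnW (hs u i ui' id) | lia].
    by apply/eqP; rewrite eqb0 -ltnNge; lia.
  apply: eq_big_nat => i /andP[_ iu].
  have [Fi0 Fi1 Fi2 Fi3 Fi4] := hF i iu.
  case: (ltngtP (F i) (nth 0 d i)) => [Flt | | ->]; last by []; last lia.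
  case: (hU i iu Flt) => [ih | [ih _]].
  + have : nth 0 d i < nth 0 d h by apply: hs; lia.
    have : F i < p by [].
    case: (leqP (F i) e); case: (leqP (nth 0 d i) e); lia.
  + subst i; lia.
have B : h.+1 <= \sum_(0 <= i < size d) (nth 0 d i + nth 0 d i <= e).
  rewrite (big_cat_nat (leq0n h.+1) (leq_trans hq hun)) /=.
  rewrite sum_all_true; first lia.
  move=> i; rewrite ltnS leq_eqVlt => /orP[/eqP -> | ih]; first lia.
  have := hs i h ih ltac:(lia); lia.
have Cg : \sum_(0 <= i < h) (G i <= e) <= h.
  have := leq_sum_range 0 h (fun i => (G i <= e) : nat) (fun _ => 1).
  rewrite sum_nat_const_nat subn0 muln1; apply => i _ /=; exact: leq_b1.
lia.
Qed.


Lemma run_add P a b st : run P (a + b) st = run P b (run P a st).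
Proof. by rewrite /run addnC iterD. Qed.

Lemma run_halted P k st : halted P st -> run P k st = st.
Proof.
move=> hh; have hst : step P st = st by case: st hh => p R M hh; rewrite /step hh.
elim: k => [//|k IH]; by rewrite runS hst.
Qed.

Definition Final (d : seq nat) (st : state) : Prop :=
  (exists R' M', st = State 37 R' M' /\ R' 0 = 1 /\
       feasible d (mkseq (fun j => M' (size d + j)) (2 * size d))) \/
  (exists R' M', st = State 39 R' M' /\ R' 0 = 0 /\ forall s, ~ feasible d s).

Lemma loop d : strict d -> forall m p h u R M F G,
  Inv d p h u M F G -> loopregs R (size d) p h u -> size d + size d + 1 - p = m ->
  exists k, k <= 20 * m + 4 /\ Final d (run Prog k (State 5 R M)).
Proof.
move=> hs; elim=> [|m IH] p h u R M F G hI hR hm.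
- have [hhu hun hp hdd _ _ _ _ _ _] := hI.
  have [R' [e1 e2]] := @done_step (size d) p h u R M hR ltac:(lia).
  exists 4; split => //; left; exists R', M; split => //; split => //.
  apply: (@inv_done _ _ _ _ _ _ _ hI); lia.
- have [hhu hun hp hdd _ _ _ _ _ _] := hI.
  have p2 : p <= size d + size d by lia.
  case: (boolP ((u < size d) && ((M u <= p) || (u == h)))) => [/andP[un hc] | hnc].
  + have hc' : M u <= p \/ u = h by case/orP: hc => [-> | /eqP ->]; [left | right].
    have [k1 [R1 [k1b [e1 hR1]]]] := @push_step _ _ _ _ _ _ hR p2 un hc'.
    have hI1 := @inv_push _ _ _ _ _ _ _ hs hI un hc'.
    have [k2 [k2b hF]] := IH _ _ _ _ _ _ _ hI1 hR1 ltac:(lia).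
    exists (k1 + k2); split; first lia.
    by rewrite run_add e1.
  + have hq : h < u.
      case: (ltngtP h u) => // hu; first lia.
      move: hnc; rewrite hu eqxx orbT andbT => hnc.
      case: (ltnP u (size d)) => un; last lia.
      by rewrite un in hnc.
    have hcu : u < size d -> p < M u.
      move=> un; move: hnc; rewrite un /= negb_or -ltnNge => /andP[] //.
    case: (leqP p (M (size d + size d + size d + h))) => hE.
    * have [k1 [R1 [k1b [e1 hR1]]]] := @pop_step _ _ _ _ _ _ hR p2 hq hcu hE.
      have hI1 := @inv_pop _ _ _ _ _ _ _ hI hq (fun un => ltac:(rewrite -hdd //; exact: hcu un)) hE.
      have [k2 [k2b hF]] := IH _ _ _ _ _ _ _ hI1 hR1 ltac:(lia).
      exists (k1 + k2); split; first lia.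
      by rewrite run_add e1.
    * have [k1 [R1 [k1b [e1 e2]]]] := @fail_step _ _ _ _ _ _ hR p2 hq hcu hE.
      exists k1; split; first lia.
      right; exists R1, M; split => //; split => //.
      exact: (@inv_fail _ _ _ _ _ _ _ hs hI hq hE).
Qed.

Theorem theorem3 :
  exists (P : program) (c : nat),
    forall d : seq nat, instance d -> distinct_deadlines d ->
      exists k, k <= c * size d + c /\
        let st := run P k (init_state d) in
        [/\ halted P st,
            reg st 0 \in [:: 0; 1],
            reg st 0 = 1 <-> (exists s, feasible d s) &
            reg st 0 = 1 -> feasible d (output_schedule d st)].

Proof.
exists Prog, 50 => d [hpos hsort] hu.
have hs : strict d.
  move=> i j ij jn.
  have hlt : sorted ltn d by rewrite ltn_sorted_uniq_leq hu hsort.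
  apply: (sorted_ltn_nth ltn_trans 0 hlt) => //; rewrite inE; lia.
have hp : forall i, i < size d -> 0 < nth 0 d i.
  by move=> i id; apply: (allP hpos); rewrite mem_nth.
have [R0 [e0 hR0]] := init_step d.
have [k [kb hF]] := @loop d hs _ _ _ _ _ _ _ _ (@inv_init d hp) hR0 (erefl _).
exists (5 + k); split; first lia.
rewrite run_add e0.
case: hF => [[R' [M' [-> [r0 hf]]]] | [R' [M' [-> [r0 hf]]]]] /=; rewrite r0.
- split => //; split => //; by exists (mkseq (fun j => M' (size d + j)) (2 * size d)).
- split => //; split => // [[s]]; by move=> /hf.
Qed.
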